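(* Let $R=\mathbb{C}[x_1,\ldots,x_n]$ with $n\geq 4$, let $d\geq 2$, and let $k$ be an integer with $\binom{n+d-1}{d}-n<k\leq \binom{n+d-1}{d}$. If $I$ is the ideal of $R$ generated by $k$ generic forms of degree $d$, then \[ H_{R/I}(t)=\left\lceil \frac{(1-t^d)^k}{(1-t)^n}\right\rceil . \]
   Context: A form of degree $d$ in $R$ is written $\sum_i\beta_i m_i$, where $m_i$ runs over the $\binom{n+d-1}{d}$ monic monomials of degree $d$; a family of forms is called generic if all the coefficients $\beta_i$ of all forms in the family are algebraically independent (over $\mathbb{Q}$). For a homogeneous ideal $I$, the Hilbert series is $H_{R/I}(t)=\sum_{i\geq 0}\dim_{\mathbb{C}}(R/I)_i\, t^i$. For a formal power series $F(t)=\sum_{i\geq 0}a_it^i$, define $\lceil F(t)\rceil=\sum_{i\geq 0}b_it^i$, where $b_i=a_i$ if $a_j>0$ for all $j\leq i$, and $b_i=0$ otherwise. *)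

(* Defs.v *)
From HB Require Import structures.
From mathcomp Require Import all_boot all_order all_algebra.
From mathcomp Require Import Rstruct.
From mathcomp Require Import complex.
From mathcomp Require Import mpoly.
Set Implicit Arguments. Unset Strict Implicit. Unset Printing Implicit Defensive.
Import GRing.Theory Num.Theory.
Local Open Scope ring_scope.

Definition CC : closedFieldType := complex Rdefinitions.R.

Definition deg_monom (n d : nat) := {m : 'X_{1..n < d.+1} | mdeg m == d}.

Definition alg_indep_Q (I : finType) (z : I -> CC) : Prop :=
  forall p : {mpoly rat[#|I|]}, p != 0 ->
    (map_mpoly (ratr : rat -> CC) p).@[fun l => z (enum_val l)] != 0.

Definition generic_forms (n d k : nat) (f : 'I_k -> {mpoly CC[n]}) : Prop :=
  (forall j, f j \is d.-homog) /\
  alg_indep_Q (fun jm : 'I_k * deg_monom n d => (f jm.1)@_(val (val jm.2))).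

Definition in_ideal (n k : nat) (f : 'I_k -> {mpoly CC[n]}) (p : {mpoly CC[n]}) :
  Prop := exists q : 'I_k -> {mpoly CC[n]}, p = \sum_(j < k) q j * f j.

Definition indep_mod (n k : nat) (f : 'I_k -> {mpoly CC[n]}) (i m : nat)
  (g : 'I_m -> {mpoly CC[n]}) : Prop :=
  (forall l, g l \is i.-homog) /\
  (forall c : 'I_m -> CC, in_ideal f (\sum_(l < m) c l *: g l) ->
     forall l, c l = 0).

(* dim_C (R/I)_i = a, where I = (f_1,...,f_k): (R/I)_i = R_i / (I cap R_i),
   so its dimension is the maximal size of a family of degree-i forms that is
   linearly independent modulo I. *)
Definition hilb_dim (n k : nat) (f : 'I_k -> {mpoly CC[n]}) (i a : nat) : Prop :=
  (exists g : 'I_a -> {mpoly CC[n]}, indep_mod f i g) /\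
  (forall g : 'I_a.+1 -> {mpoly CC[n]}, ~ indep_mod f i g).

(* Coefficient of t^i in the power series (1 - t^d)^k / (1 - t)^n, using
   1/(1-t)^n = sum_l binom(n-1+l, n-1) t^l. *)
Definition series_coef (n d k i : nat) : int :=
  \sum_(j < i.+1)
     (((1 - 'X^d) ^+ k : {poly int})`_j * ('C(n.-1 + (i - j), n.-1))%:Z).

(* The i-th coefficient of ceil(F) for F = sum_i a_i t^i. *)
Definition ceil_coef (a : nat -> int) (i : nat) : int :=
  if [forall j : 'I_i.+1, 0 < a j] then a i else 0.

(* Main.v *)
Require Import Defs.
From HB Require Import structures.
From mathcomp Require Import all_boot all_order all_algebra.
From mathcomp Require Import Rstruct complex mpoly.
From mathcomp Require Import zify ring lra.
Import GRing.Theory Num.Theory.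
Local Open Scope ring_scope.
Set Implicit Arguments. Unset Strict Implicit. Unset Printing Implicit Defensive.
Section Basic.
Variable n : nat.
Implicit Types (p q : {mpoly CC[n]}).

Definition mon e (t : deg_monom n e) : 'X_{1..n} := val (val t).

Lemma mdeg_mon e (t : deg_monom n e) : mdeg (mon t) = e.
Proof. by case: t => t /= /eqP ->. Qed.

Lemma ltS_of_eq e (m : 'X_{1..n}) : mdeg m == e -> (mdeg m < e.+1)%N.
Proof. by move/eqP->. Qed.

Definition mkMon e (m : 'X_{1..n}) (H : mdeg m == e) : deg_monom n e :=
  exist _ (BMultinom (ltS_of_eq H)) H.

Lemma mon_mkMon e m (H : mdeg m == e) : mon (mkMon H) = m.
Proof. by []. Qed.

Lemma mon_inj e : injective (@mon e).
Proof. by move=> t1 t2 H; apply/val_inj/val_inj. Qed.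

Lemma mon_surj e m : mdeg m = e -> exists t : deg_monom n e, mon t = m.
Proof. by move=> /eqP H; exists (mkMon H). Qed.

Lemma homog_eq e p q : p \is e.-homog -> q \is e.-homog ->
  (forall t : deg_monom n e, p@_(mon t) = q@_(mon t)) -> p = q.
Proof.
move=> hp hq H; apply/mpolyP => m.
case: (eqVneq (mdeg m) e) => [/mon_surj [t <-]|ne]; first exact: H.
by rewrite (dhomog_nemf_coeff hp ne) (dhomog_nemf_coeff hq ne).
Qed.

Lemma coefM_low d p q m : q \is d.-homog -> (mdeg m <= d)%N ->
  (p * q)@_m = p@_0%MM * q@_m.
Proof.
move=> hq le; rewrite mcoeffM.
have h0 : (mdeg (0%MM : 'X_{1..n}) < (mdeg m).+1)%N by rewrite mdeg0.
pose k0 : 'X_{1..n < (mdeg m).+1, (mdeg m).+1} :=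
  (BMultinom h0,
   @BMultinom n (mdeg m).+1 m (ltnSn _)).
rewrite (bigD1 k0) /=; last by rewrite add0m.
rewrite big1 ?addr0 // => kk /andP [/eqP hm hne].
case: (eqVneq (mdeg kk.2) d) => [e2|ne]; last by rewrite (dhomog_nemf_coeff hq ne) mulr0.
have : mdeg kk.1 == 0%N.
  have hd : mdeg m = (mdeg kk.1 + mdeg kk.2)%N by rewrite {1}hm mdegD.
  by move: le hd; rewrite e2; lia.
rewrite mdeg_eq0 => /eqP e1.
exfalso; move: hne; rewrite /k0; case: kk hm e1 {e2} => [[a ha] [b hb]] /= hm e1.
subst a; rewrite add0m in hm; subst b.
by rewrite !xpair_eqE; apply/negP; rewrite negbK; apply/andP; split; apply/eqP/val_inj.
Qed.

End Basic.
Section Ideal.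
Variables (n k : nat) (f : 'I_k -> {mpoly CC[n]}).
Implicit Types (p q : {mpoly CC[n]}).

Lemma in_ideal0 : in_ideal f 0.
Proof. by exists (fun _ => 0); rewrite big1 // => j _; rewrite mul0r. Qed.

Lemma in_idealD p q : in_ideal f p -> in_ideal f q -> in_ideal f (p + q).
Proof.
move=> [a ->] [b ->]; exists (fun j => a j + b j).
by rewrite -big_split; apply: eq_bigr => j _; rewrite mulrDl.
Qed.

Lemma in_idealMl r p : in_ideal f p -> in_ideal f (r * p).
Proof.
move=> [a ->]; exists (fun j => r * a j).
by rewrite mulr_sumr; apply: eq_bigr => j _; rewrite mulrA.
Qed.

Lemma in_idealZ c p : in_ideal f p -> in_ideal f (c *: p).
Proof. by move=> h; rewrite -mul_mpolyC; apply: in_idealMl. Qed.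

Lemma in_ideal_sum (I : finType) (F : I -> {mpoly CC[n]}) :
  (forall i, in_ideal f (F i)) -> in_ideal f (\sum_i F i).
Proof.
move=> h; apply: (big_ind (in_ideal f)) => //; [exact: in_ideal0|exact: in_idealD].
Qed.

Lemma in_ideal_gen j : in_ideal f (f j).
Proof.
exists (fun i => (i == j)%:R); rewrite (bigD1 j) //= big1 ?addr0 ?eqxx ?mul1r //.
by move=> i /negbTE ->; rewrite mul0r.
Qed.

Lemma in_ideal_coef d p : (forall j, f j \is d.-homog) -> in_ideal f p ->
  exists lam : 'I_k -> CC, forall m, (mdeg m <= d)%N ->
    p@_m = \sum_j lam j * (f j)@_m.
Proof.
move=> hf [a ->]; exists (fun j => (a j)@_0%MM) => m le.
rewrite raddf_sum; apply: eq_bigr => j _ /=. by rewrite (coefM_low (a j) (hf j) le).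
Qed.

End Ideal.

Lemma coefXM n (u m : 'X_{1..n}) (p : {mpoly CC[n]}) :
  ('X_[u] * p)@_m = if (u <= m)%MM then p@_(m - u)%MM else 0.
Proof.
case: ifP => le.
  by rewrite -(commr_mpolyX u p) -{1}(submK le) addmC mcoeffMX.
rewrite mcoeffM big1 // => kk /eqP hm; rewrite mcoeffX.
case: eqP => [e|]; last by rewrite mul0r.
by exfalso; move: le; rewrite hm e lem_addr.
Qed.

Lemma dep_vec (m q : nat) (A : 'M[CC]_(m, q)) : (q < m)%N ->
  exists2 u : 'rV[CC]_m, u != 0 & u *m A = 0.
Proof.
move=> lt.
have : kermx A != 0.
  rewrite kermx_eq0 /row_free; apply/negP => /eqP h.
  by have := rank_leq_col A; rewrite h; lia.
move=> /eqP nz.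
case: (pickP (fun ij : 'I_m * 'I_m => kermx A ij.1 ij.2 != 0)) => [[i j] /= hij|H]; last first.
  exfalso; apply: nz; apply/matrixP => i j; move: (H (i, j)) => /= /negbFE /eqP ->; by rewrite mxE.
exists (row i (kermx A)).
  by apply/eqP => /matrixP /(_ 0 j); rewrite mxE => h; move: hij; rewrite h mxE eqxx.
by rewrite -row_mul mulmx_ker row0.
Qed.
Lemma generic_det (I : finType) (z : I -> CC) s (M : 'M[{mpoly rat[#|I|]}]_s)
  (w : 'I_#|I| -> rat) :
  alg_indep_Q z -> \det (map_mx (meval w) M) != 0 ->
  \det (map_mx (fun P => (map_mpoly (ratr : rat -> CC) P).@[fun l => z (enum_val l)]) M) != 0.
Proof.
move=> hz hw.
have e1 : \det (map_mx (meval w) M) = meval w (\det M) by apply: (det_map_mx (meval w)).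
have nz : \det M != 0 by apply: contraNneq hw => h; rewrite e1 h meval0.
have := hz _ nz.
have -> : map_mx (fun P => (map_mpoly (ratr : rat -> CC) P).@[fun l => z (enum_val l)]) M
  = map_mx (meval (fun l => z (enum_val l))) (map_mx (map_mpoly (ratr : rat -> CC)) M).
  by apply/matrixP => i j; rewrite !mxE.
by rewrite (det_map_mx (meval _)) (det_map_mx (map_mpoly _)).
Qed.
Section Generic.
Variables (n d k : nat) (f : 'I_k -> {mpoly CC[n]}).
Hypothesis fhom : forall j, f j \is d.-homog.
Local Notation Mon := (deg_monom n d).
Local Notation I := ('I_k * Mon)%type.
Let z (jm : I) : CC := (f jm.1)@_(mon jm.2).
Hypothesis hz : alg_indep_Q z.

Definition Xv (j : 'I_k) (t : Mon) : {mpoly rat[#|{: I}|]} := 'X_(enum_rank (j, t)).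

Let ev (P : {mpoly rat[#|{: I}|]}) : CC :=
  (map_mpoly (ratr : rat -> CC) P).@[fun l => z (enum_val l)].

Lemma ev_Xv j t : ev (Xv j t) = (f j)@_(mon t).
Proof. by rewrite /ev /Xv map_mpolyX mevalXU enum_rankK. Qed.

Lemma ev_sum (J : finType) (P : pred J) (F : J -> {mpoly rat[#|{: I}|]}) :
  ev (\sum_(t | P t) F t) = \sum_(t | P t) ev (F t).
Proof.
apply: (big_morph ev) => [a b|]; last by rewrite /ev !raddf0.
by rewrite /ev !raddfD.
Qed.

Lemma meval_Xv w j t : meval w (Xv j t) = w (enum_rank (j, t)).
Proof. by rewrite /Xv mevalXU. Qed.

Lemma generic_nz s (M : 'M[{mpoly rat[#|{: I}|]}]_s) (w : 'I_#|{: I}| -> rat) :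
  map_mx (meval w) M = 1%:M -> \det (map_mx ev M) != 0.
Proof.
move=> h; apply: (generic_det (z := z) (w := w)) => //.
by rewrite h det1 oner_neq0.
Qed.

Section Minor.
Hypothesis kN : (k <= #|{: Mon}|)%N.
Definition cB (r : 'I_k) : Mon := enum_val (widen_ord kN r).

Lemma cB_inj : injective cB.
Proof. move=> r1 r2 /enum_val_inj /(congr1 val) /= h; exact: val_inj. Qed.

Definition FB : 'M[CC]_k := \matrix_(j, r) (f j)@_(mon (cB r)).

Lemma FB_det : \det FB != 0.
Proof.
pose M : 'M[{mpoly rat[#|{: I}|]}]_k := \matrix_(j, r) Xv j (cB r).
pose w (l : 'I_#|{: I}|) : rat := ((enum_val l).2 == cB (enum_val l).1)%:R.
have -> : FB = map_mx ev M by apply/matrixP => j r; rewrite !mxE ev_Xv.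
apply: (generic_nz (w := w)); apply/matrixP => j r.
rewrite !mxE meval_Xv /w enum_rankK /= (inj_eq cB_inj) eq_sym.
by [].
Qed.

Lemma FB_inj (u : 'rV[CC]_k) : u *m FB = 0 -> u = 0.
Proof.
move=> h; have U : FB \in unitmx by rewrite unitmxE unitfE FB_det.
by rewrite -(mulmxK U u) h mul0mx.
Qed.



End Minor.
Section Cover.
Variables (T : 'I_k -> Mon) (ph : deg_monom n d.+1 -> 'I_k * 'I_n).
Hypothesis hph : forall m, (mon (T (ph m).1) + U_((ph m).2))%MM = mon m.

Lemma ev_E j (v : 'I_n) (m' : 'X_{1..n}) : mdeg m' = d.+1 ->
  \sum_(t : Mon | (mon t + U_(v) == m')%MM) (f j)@_(mon t) = ('X_v * f j)@_m'.
Proof.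
move=> hm; rewrite coefXM; case: ifP => le.
  have hd : mdeg (m' - U_(v))%MM == d.
    by move: hm; rewrite -{1}(submK le) mdegD mdeg1 addn1 => -[->].
  rewrite (big_pred1 (mkMon hd)) ?mon_mkMon // => t /=.
  apply/eqP/eqP => [e|->]; last by rewrite mon_mkMon submK.
  by apply: mon_inj; rewrite mon_mkMon -e addmK.
rewrite big_pred0 // => t; apply/negbTE; apply: contraFN le => /eqP <-.
exact: lem_addl.
Qed.

Lemma sum_pick (v : 'I_n) (m' : 'X_{1..n}) (t0 : Mon) :
  \sum_(t : Mon | (mon t + U_(v) == m')%MM) ((t == t0)%:R : rat)
  = ((mon t0 + U_(v) == m')%MM)%:R.
Proof.
case: (boolP (mon t0 + U_(v) == m')%MM) => h.
  rewrite (bigD1 t0) //= eqxx big1 ?addr0 // => t /andP [_ /negbTE ->] //.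
rewrite big1 // => t ht; case: eqP => // e; move: h; rewrite -e ht //.
Qed.

Local Notation N1 := #|{: deg_monom n d.+1}|.

Definition FD : 'M[CC]_N1 := \matrix_(r, c)
  ('X_((ph (enum_val r)).2) * f (ph (enum_val r)).1)@_(mon (enum_val c)).

Lemma FD_det : \det FD != 0.
Proof.
pose M : 'M[{mpoly rat[#|{: I}|]}]_N1 := \matrix_(r, c)
  \sum_(t : Mon | (mon t + U_((ph (enum_val r)).2) == mon (enum_val c))%MM)
     Xv (ph (enum_val r)).1 t.
pose w (l : 'I_#|{: I}|) : rat := ((enum_val l).2 == T (enum_val l).1)%:R.
have -> : FD = map_mx ev M.
  apply/matrixP => r c; rewrite !mxE -ev_E ?mdeg_mon //.
  by rewrite ev_sum; apply: eq_bigr => t _; rewrite ev_Xv.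
apply: (generic_nz (w := w)); apply/matrixP => r c.
rewrite !mxE raddf_sum /=.
under eq_bigr => t _ do rewrite meval_Xv /w enum_rankK /=.
rewrite sum_pick hph (inj_eq (@mon_inj _ _)) (inj_eq enum_val_inj).
by [].
Qed.

Lemma monomials_in_ideal (m : deg_monom n d.+1) : in_ideal f 'X_[mon m].
Proof.
have U : FD \in unitmx by rewrite unitmxE unitfE FD_det.
pose u : 'rV[CC]_N1 := delta_mx 0 (enum_rank m) *m invmx FD.
pose P := \sum_r u 0 r *: ('X_((ph (enum_val r)).2) * f (ph (enum_val r)).1).
have -> : 'X_[mon m] = P.
  apply: (homog_eq (e := d.+1)).
  - by rewrite dhomogX; apply/eqP; apply: mdeg_mon.
  - apply: rpred_sum => r _; apply: rpredZ.
    have hX : ('X_((ph (enum_val r)).2) : {mpoly CC[n]}) \is 1.-homog.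
      by rewrite dhomogX; apply/eqP; apply: mdeg1.
    by have := dhomogM hX (fhom (ph (enum_val r)).1); rewrite add1n.
  move=> c; rewrite /P raddf_sum /=.
  have hu : u *m FD = delta_mx 0 (enum_rank m) by rewrite /u mulmxKV.
  move/matrixP: hu => /(_ 0 (enum_rank c)).
  rewrite !mxE /=. rewrite (inj_eq enum_rank_inj) mcoeffX (inj_eq (@mon_inj _ _)) eq_sym => <-.
  by apply: eq_bigr => r _; rewrite mcoeffZ !mxE enum_rankK.
apply: in_ideal_sum => r; apply: in_idealZ; apply: in_idealMl; exact: in_ideal_gen.
Qed.

End Cover.
End Generic.
Lemma cover_exists n d k : (0 < n)%N -> (2 <= d)%N ->
  (#|{: deg_monom n d}| < k + n)%N ->
  exists T : 'I_k -> deg_monom n d, forall m : deg_monom n d.+1,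
    exists jv : 'I_k * 'I_n, (mon (T jv.1) + U_(jv.2))%MM = mon m.
Proof.
case: n => [//|n'] _ d2 hk; set n := n'.+1 in hk *.
pose o : 'I_n := ord0.
have hdeg : forall i : 'I_n, mdeg (U_(o) *+ d.-1 + U_(i))%MM == d.
  by move=> i; rewrite mdegD mdegMn !mdeg1; apply/eqP; lia.
pose h i := mkMon (hdeg i).
have hinj : injective h.
  move=> i1 i2 /(congr1 (@mon _ _)); rewrite !mon_mkMon => /addmI.
  by move/mnmP/(_ i1); rewrite !mnm1E eqxx; case: eqP.
pose G := [set t : deg_monom n d | mon t o != d.-1].
have cG : (#|G| <= k)%N.
  have sub : [set h i | i in [set~ o]] \subset ~: G.
    apply/subsetP => t; case/imsetP => i; rewrite !inE => hi ->.
    rewrite negbK mon_mkMon mnmDE mulmnE !mnm1E eqxx eq_sym (negbTE hi).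
    by rewrite mul1n addn0.
  have := subset_leq_card sub; rewrite card_imset // cardsC1 card_ord.
  have e : #|{: deg_monom n d}| = (#|G| + #|~: G|)%N by rewrite cardsC.
  move: hk; rewrite e; lia.
pose T (j : 'I_k) := nth (h o) (enum G) j.
exists T => m.
have [v [hv hvo]] : exists v : 'I_n, (mon m v != 0)%N /\ ((mon m - U_(v))%MM o != d.-1)%N.
  case: (boolP ((mon m o != 0) && (mon m o != d))%N) => [/andP [a0 ad]|].
    exists o; split => //; rewrite mnmBE mnm1E eqxx; move: a0 ad; lia.
  move=> ha.
  case: (pickP (fun v : 'I_n => (v != o) && (mon m v != 0)%N)) => [v /andP [vo hv]|H].
    exists v; split => //; rewrite mnmBE mnm1E (negbTE vo) subn0; move: ha; lia.
  exfalso; have := mdeg_mon m; rewrite mdegE (bigD1 o) //= big1; last first.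
    by move=> i io; move: (H i); rewrite /= io /= => /negbFE /eqP.
  by move: ha; lia.
have hle : (U_(v) <= mon m)%MM by rewrite lep1mP.
have hd : mdeg (mon m - U_(v))%MM == d.
  by have := mdeg_mon m; rewrite -{1}(submK hle) mdegD mdeg1 addn1 => -[->].
pose t := mkMon hd.
have tG : t \in G by rewrite inE mon_mkMon.
have jk : (index t (enum G) < k)%N.
  by apply: leq_trans cG; rewrite cardE index_mem mem_enum.
exists (Ordinal jk, v) => /=.
by rewrite /T /= nth_index ?mem_enum // mon_mkMon submK.
Qed.
Lemma split_mnm n (m : 'X_{1..n}) e : (e <= mdeg m)%N ->
  exists m1 m2, m = (m1 + m2)%MM /\ mdeg m1 = e.
Proof.
elim: e => [|e IH] le.
  by exists 0%MM, m; rewrite add0m mdeg0.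
have [m1 [m2 [em h1]]] := IH (ltnW le).
rewrite em in le *.
have : m2 != 0%MM by rewrite -mdeg_eq0; move: le; rewrite mdegD h1; lia.
case: (pickP (fun i => m2 i != 0%N)) => [i hi _|H]; last first.
  by move=> /eqP []; apply/mnmP => i; rewrite mnm0E; move: (H i) => /= /negbFE /eqP.
have hle : (U_(i) <= m2)%MM by rewrite lep1mP.
exists (m1 + U_(i))%MM, (m2 - U_(i))%MM; split.
  by rewrite -addmA [(U_(i) + _)%MM]addmC submK.
by rewrite mdegD mdeg1 h1 addn1.
Qed.

Section Dims.
Variables (n d k : nat) (f : 'I_k -> {mpoly CC[n]}).
Hypothesis fhom : forall j, f j \is d.-homog.
Implicit Types (p q g : {mpoly CC[n]}).

Lemma high_in_ideal : (forall t : deg_monom n d.+1, in_ideal f 'X_[mon t]) ->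
  forall i g, (d.+1 <= i)%N -> g \is i.-homog -> in_ideal f g.
Proof.
move=> hX i g le hg; rewrite (mpolyE g) big_seq.
apply: (big_ind (in_ideal f)); [exact: in_ideal0|exact: in_idealD|].
move=> m hm'; have hm := dhomog_mf hg hm'.
have le' : (d.+1 <= mdeg m)%N by rewrite hm.
have [m1 [m2 [-> h1]]] := split_mnm le'.
apply: in_idealZ; rewrite mpolyXD mulrC; apply: in_idealMl.
by have [t <-] := mon_surj h1; apply: hX.
Qed.

Lemma hilb_zero i : (forall g, g \is i.-homog -> in_ideal f g) -> hilb_dim f i 0.
Proof.
move=> H; split.
  exists (fun _ => 0); split => [l|c _ l]; last by case: l.
  exact: rpred0.
move=> g [hg Hi]; have := Hi (fun _ => 1).
have : in_ideal f (\sum_(l < 1) (fun _ : 'I_1 => (1 : CC)) l *: g l).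
  apply: H; apply: rpred_sum => l _; apply: rpredZ; exact: hg.
by move=> h /(_ h ord0) /eqP; rewrite oner_eq0.
Qed.

Lemma dep_forms e a (g : 'I_a -> {mpoly CC[n]}) :
  (forall l, g l \is e.-homog) -> (#|{: deg_monom n e}| < a)%N ->
  exists2 c : 'I_a -> CC, (exists l, c l != 0) & \sum_l c l *: g l = 0.
Proof.
move=> hg lt.
pose Gm : 'M[CC]_(a, #|{: deg_monom n e}|) := \matrix_(l, r) (g l)@_(mon (enum_val r)).
have [u nz hu] := dep_vec Gm lt.
exists (fun l => u 0 l).
  case: (pickP (fun l => u 0 l != 0)) => [l hl|H]; first by exists l.
  exfalso; move/eqP: nz; apply; apply/matrixP => i j; rewrite (ord1 i).
  by move: (H j) => /= /negbFE /eqP ->; rewrite mxE.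
apply: (homog_eq (e := e)); first by apply: rpred_sum => l _; apply: rpredZ; exact: hg.
  exact: dhomog0.
move=> t; rewrite mcoeff0 raddf_sum /=.
move/matrixP: hu => /(_ 0 (enum_rank t)); rewrite !mxE => e0.
transitivity (\sum_j u 0 j * Gm j (enum_rank t)); last exact: e0.
by apply: eq_bigr => l _; rewrite mcoeffZ mxE enum_rankK.
Qed.

Lemma hilb_low i : (i < d)%N -> hilb_dim f i #|{: deg_monom n i}|.
Proof.
move=> lt; split.
  exists (fun l => 'X_[mon (enum_val l)]); split.
    by move=> l; rewrite dhomogX; apply/eqP; apply: mdeg_mon.
  move=> c /(in_ideal_coef fhom) [lam hlam] l0.
  have := hlam (mon (enum_val l0)); rewrite mdeg_mon => /(_ (ltnW lt)).
  rewrite [X in _ = X -> _]big1; last first.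
    have hne : mdeg (mon (enum_val l0)) != d by rewrite mdeg_mon neq_ltn lt.
    by move=> j _; rewrite (dhomog_nemf_coeff (fhom j) hne) mulr0.
  rewrite raddf_sum (bigD1 l0) //= mcoeffZ mcoeffX eqxx mulr1 big1 ?addr0 //.
  move=> l hl; rewrite mcoeffZ mcoeffX (inj_eq (@mon_inj _ _)) (inj_eq enum_val_inj).
  by rewrite (negbTE hl) mulr0.
move=> g [hg Hi].
have [c [l hl] hc] := dep_forms hg (ltnSn _).
by move: hl; rewrite Hi ?eqxx // hc; apply: in_ideal0.
Qed.

End Dims.
Section DimD.
Variables (n d k : nat) (f : 'I_k -> {mpoly CC[n]}).
Hypothesis fhom : forall j, f j \is d.-homog.
Hypothesis kN : (k <= #|{: deg_monom n d}|)%N.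
Hypothesis FBinj : forall u : 'rV[CC]_k, u *m FB f kN = 0 -> u = 0.
Local Notation N := #|{: deg_monom n d}|.

Lemma cC_proof (l : 'I_(N - k)) : (k + l < N)%N.
Proof. have := ltn_ord l; lia. Qed.

Definition cC (l : 'I_(N - k)) : deg_monom n d := enum_val (Ordinal (cC_proof l)).

Lemma hilb_d : hilb_dim f d (N - k).
Proof.
split.
  exists (fun l => 'X_[mon (cC l)]); split.
    by move=> l; rewrite dhomogX; apply/eqP; apply: mdeg_mon.
  move=> c /(in_ideal_coef fhom) [lam hlam].
  have lam0 : forall j, lam j = 0.
    pose v : 'rV[CC]_k := \row_j lam j.
    have : v *m FB f kN = 0.
      apply/matrixP => i r; rewrite !mxE (eq_bigr (fun j => lam j * (f j)@_(mon (cB kN r)))); last by move=> j _; rewrite !mxE.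
      have := hlam (mon (cB kN r)); rewrite mdeg_mon => /(_ (leqnn _)) <-.
      rewrite raddf_sum big1 // => l _ /=; rewrite mcoeffZ mcoeffX.
      rewrite (inj_eq (@mon_inj _ _)) /cC /cB (inj_eq enum_val_inj).
      case: eqP => [/(congr1 val) /= e|]; last by rewrite mulr0.
      by have := ltn_ord r; rewrite -e; lia.
    move/FBinj => /matrixP hv j.
    by have := hv 0 j; rewrite !mxE.
  move=> l0; have := hlam (mon (cC l0)); rewrite mdeg_mon => /(_ (leqnn _)).
  rewrite [X in _ = X -> _]big1; last by move=> j _; rewrite lam0 mul0r.
  rewrite raddf_sum (bigD1 l0) //= mcoeffZ mcoeffX eqxx mulr1 big1 ?addr0 //.
  move=> l hl; rewrite mcoeffZ mcoeffX (inj_eq (@mon_inj _ _)) (inj_eq enum_val_inj).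
  case: eqP => [/(congr1 val) /= e|]; last by rewrite mulr0.
  by exfalso; move/negP: hl; apply; apply/eqP/val_inj => /=; lia.
move=> g [hg Hi].
pose Gm : 'M[CC]_((N - k).+1, N) := \matrix_(l, r) (g l)@_(mon (enum_val r)).
pose Fm : 'M[CC]_(k, N) := \matrix_(j, r) (f j)@_(mon (enum_val r)).
have lt : (N < (N - k).+1 + k)%N by lia.
have [u nz hu] := dep_vec (col_mx Gm Fm) lt.
rewrite -[u]hsubmxK mul_row_col in hu.
set u1 := lsubmx u in hu; set u2 := rsubmx u in hu.
have hc := Hi (fun l => u1 0 l).
have u10 : u1 = 0.
  apply/matrixP => i l0; rewrite (ord1 i) [RHS]mxE; apply: hc.
  have -> : \sum_l u1 0 l *: g l = \sum_j (- u2 0 j) *: f j.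
    apply: (homog_eq (e := d)).
    - by apply: rpred_sum => l _; apply: rpredZ; exact: hg.
    - by apply: rpred_sum => j _; apply: rpredZ; exact: fhom.
    move=> t; rewrite !raddf_sum /=.
    move/matrixP: hu => /(_ 0 (enum_rank t)); rewrite !mxE => e0.
    have e1 : \sum_j u1 0 j * Gm j (enum_rank t) = - \sum_j u2 0 j * Fm j (enum_rank t).
      by apply/eqP; rewrite -addr_eq0 e0.
    transitivity (\sum_j u1 0 j * Gm j (enum_rank t)).
      by apply: eq_bigr => l _ /=; rewrite mcoeffZ [Gm _ _]mxE enum_rankK.
    rewrite e1 -sumrN; apply: eq_bigr => j _.
    by rewrite mcoeffZ [Fm _ _]mxE enum_rankK mulNr.
  by apply: in_ideal_sum => j; apply: in_idealZ; apply: in_ideal_gen.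
have u20 : u2 = 0.
  apply: FBinj; apply/matrixP => i r; rewrite (ord1 i).
  move/matrixP: hu => /(_ 0 (widen_ord kN r)).
  rewrite u10 mul0mx add0r !mxE => e0.
  transitivity (\sum_j u2 0 j * Fm j (widen_ord kN r)); last exact: e0.
  by apply: eq_bigr => j _; rewrite [FB _ _ _ _]mxE [Fm _ _]mxE.
move: nz; rewrite -[u]hsubmxK -/u1 -/u2 u10 u20.
by rewrite row_mx0 eqxx.
Qed.

End DimD.
Lemma card_mon n' i : #|{: deg_monom n'.+1 i}| = 'C(i + n', i).
Proof.
rewrite -(size_basis n' i) cardE -(size_map (@mon _ _)).
apply: perm_size; apply: uniq_perm.
- rewrite map_inj_uniq ?enum_uniq //; exact: mon_inj.
- exact: uniq_basis.
move=> m; rewrite -basis_cover; apply/mapP/idP => [[t _ ->]|/eqP h].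
  by rewrite mdeg_mon.
by have [t <-] := mon_surj h; exists t; rewrite ?mem_enum.
Qed.
Lemma binsym a b : 'C(a + b, a) = 'C(a + b, b).
Proof. by rewrite -{2}(addnK b a) bin_sub // leq_addl. Qed.

Lemma key_ineq n' d k : (3 <= n')%N -> (2 <= d)%N ->
  ('C(n' + d, d) < k + n'.+1)%N -> ('C(n' + d.+1, n') < k * n'.+1)%N.
Proof.
move=> hn hd hk.
set N := 'C(n' + d, d) in hk.
have e1 : ((n' + d.+1) * N = d.+1 * 'C(n' + d.+1, d.+1))%N.
  by rewrite /N -mul_bin_diag addnS.
have e2 : 'C(n' + d.+1, n') = 'C(n' + d.+1, d.+1) by rewrite binsym.
have e3 : ((n'.+2 * n'.+1) <= 2 * N)%N.
  have : ('C(n'.+2, 2) <= N)%N.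
    rewrite /N -binsym.
    have -> : 'C(n'.+2, 2) = 'C(2 + n', n') by rewrite add2n -{1}add2n binsym.
    by apply: leq_bin2l; lia.
  have : (n'.+2 * 'C(n'.+1, 1) = 2 * 'C(n'.+2, 2))%N by rewrite -mul_bin_diag.
  rewrite bin1; lia.
rewrite e2.
set M := 'C(n' + d.+1, d.+1) in e1 *.
have hN : (n' < N)%N by nia.
have : (d.+1 * M < d.+1 * (k * n'.+1))%N; last by rewrite ltn_pmul2l.
rewrite -e1.
have h1 : ((N - n') * n'.+1 * d.+1 <= k * n'.+1 * d.+1)%N.
  by rewrite leq_pmul2r // leq_pmul2r //; lia.
have h2 : ((n' + d.+1) * N < (N - n') * n'.+1 * d.+1)%N.
  have h3 : (n'.+1 * d.+1 < N * d)%N.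
    have : (2 * (n'.+1 * d.+1) < 2 * (N * d))%N.
      apply: (@leq_trans (n'.+2 * n'.+1 * d)); last by rewrite mulnA leq_pmul2r; lia.
      nia.
    by rewrite ltn_pmul2l.
  nia.
by move: h1 h2; rewrite [(k * _ * _)%N]mulnC [(k * _)%N]mulnC mulnA; lia.
Qed.
Lemma powP_decomp (d k : nat) : exists r : {poly int},
  ((1 - 'X^d) ^+ k : {poly int}) = 1 - 'X^d *+ k + 'X^d * 'X^d * r.
Proof.
elim: k => [|k [r IH]]; first by exists 0; rewrite expr0 mulr0n subr0 mulr0 addr0.
exists (r - r * 'X^d + k%:R); rewrite exprS IH mulrS; ring.
Qed.

Lemma powP_coef (d k j : nat) : (0 < d)%N -> (j < d + d)%N ->
  ((1 - 'X^d) ^+ k : {poly int})`_j = (j == 0%N)%:R - (k%:Z) * (j == d)%:R.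
Proof.
move=> d0 lt; have [r ->] := powP_decomp d k.
rewrite coefD coefB coef1 coefMn coefXn -exprD coefXnM lt addr0.
congr (_ - _); case: (j == d); rewrite /= ?mulr1 ?mulr0 ?mul0rn ?natz //.
Qed.

Lemma series_gen n' d k i : (0 < d)%N -> (i < d + d)%N ->
  series_coef n'.+1 d k i =
  ('C(n' + i, n'))%:Z - (if (d <= i)%N then k%:Z * ('C(n' + (i - d), n'))%:Z else 0).
Proof.
move=> d0 lt; rewrite /series_coef /=.
rewrite (eq_bigr (fun j : 'I_i.+1 => ((nat_of_ord j == 0%N)%:R * ('C(n' + (i - j), n'))%:Z)
     - (k%:Z * (nat_of_ord j == d)%:R * ('C(n' + (i - j), n'))%:Z))); last first.
  move=> j _; rewrite powP_coef //; last by have := ltn_ord j; lia.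
  by rewrite mulrBl.
rewrite sumrB big_ord_recl /= mul1r subn0 big1 ?addr0; last first.
  by move=> j _; rewrite mul0r.
congr (_ - _); case: leqP => hdi.
  have hd : (d < i.+1)%N by lia.
  rewrite (bigD1 (Ordinal hd)) //= eqxx mulr1 big1 ?addr0 // => j hj.
  have -> : (nat_of_ord j == d) = false.
    by apply/negbTE; apply: contra hj => /eqP e; apply/eqP/val_inj.
  by rewrite mulr0 mul0r.
rewrite big1 // => j _.
have -> : (nat_of_ord j == d) = false by have := ltn_ord j; move=> h; apply/negbTE; lia.
by rewrite mulr0 mul0r.
Qed.
Lemma ceil_pos (a : nat -> int) i : (forall j, (j <= i)%N -> 0 < a j) ->
  ceil_coef a i = a i.
Proof.
move=> h; rewrite /ceil_coef; case: ifP => // /negP []; apply/forallP => j.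
by apply: h; rewrite -ltnS.
Qed.

Lemma ceil_neg (a : nat -> int) i j : (j <= i)%N -> a j <= 0 ->
  ceil_coef a i = 0.
Proof.
move=> le h; rewrite /ceil_coef; case: ifP => // /forallP /(_ (Ordinal (leq_ltn_trans le (ltnSn i)))).
by rewrite /= Order.TotalTheory.ltNge h.
Qed.

Lemma series_low n' d k j : (0 < d)%N -> (j < d)%N ->
  series_coef n'.+1 d k j = ('C(j + n', j))%:Z.
Proof.
move=> d0 lt; rewrite series_gen //; last by lia.
by rewrite leqNgt lt subr0 addnC binsym.
Qed.

Unset Implicit Arguments.

Theorem mainTheorem2 (n d k : nat) :
  (4 <= n)%N -> (2 <= d)%N ->
  ('C(n + d - 1, d) - n < k)%N -> (k <= 'C(n + d - 1, d))%N ->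
  forall f : 'I_k -> {mpoly CC[n]}, generic_forms d f ->
  forall i : nat, exists a : nat,
    hilb_dim f i a /\ a%:Z = ceil_coef (series_coef n d k) i.
Proof.
case: n => [//|n'] hn hd hk1 hk2 f [fhom hz] i.
have e : (n'.+1 + d - 1 = n' + d)%N by lia.
rewrite e in hk1 hk2.
have eN : #|{: deg_monom n'.+1 d}| = 'C(n' + d, d) by rewrite card_mon addnC.
have kN : (k <= #|{: deg_monom n'.+1 d}|)%N by rewrite eN.
have d0 : (0 < d)%N by lia.
have posl : forall j, (j < d)%N -> 0 < series_coef n'.+1 d k j.
  by move=> j lt; rewrite series_low // ltz_nat bin_gt0 leq_addr.
case: (ltngtP i d) => [lt|gt|->].
- exists #|{: deg_monom n'.+1 i}|; split; first exact: hilb_low.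
  rewrite ceil_pos; last by move=> j le; apply: posl; lia.
  by rewrite series_low // card_mon.
- exists 0%N; split.
    apply: hilb_zero => g hg.
    have hk3 : (#|{: deg_monom n'.+1 d}| < k + n'.+1)%N by rewrite eN; lia.
    have [T hT] := cover_exists (ltn0Sn n') hd hk3.
    have [ph hph] := fin_all_exists hT.
    exact: (high_in_ideal (monomials_in_ideal fhom hz hph) gt hg).
  rewrite (ceil_neg (j := d.+1)) //.
  rewrite series_gen //; last by lia.
  rewrite leqnSn subSn // subnn (binsym n' 1) bin1 subr_le0 -PoszM lez_nat addn1.
  by apply: ltnW; apply: key_ineq => //; lia.
- exists (#|{: deg_monom n'.+1 d}| - k)%N; split.
    exact: (hilb_d fhom (@FB_inj _ _ _ _ hz kN)).
  have sd : series_coef n'.+1 d k d = ('C(n' + d, d))%:Z - k%:Z.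
    rewrite series_gen //; last by lia.
    by rewrite leqnn subnn addn0 binn mulr1 binsym.
  rewrite eN -subzn //.
  case: (ltnP k 'C(n' + d, d)) => hkN.
    rewrite ceil_pos ?sd // => j; rewrite leq_eqVlt => /orP [/eqP ->|]; last exact: posl.
    by rewrite sd subr_gt0 ltz_nat.
  have ek : k = 'C(n' + d, d) by apply/eqP; rewrite eqn_leq hkN hk2.
  have s0 : series_coef n'.+1 d k d = 0 by rewrite sd ek subrr.
  by rewrite /ceil_coef s0 -ek subrr; case: ifP.
Qed.
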